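(* Let $v\equiv 3\pmod 6$. If a $(v,3,2)$-BIBD $(X,\mathcal{A})$ has a strong nesting $\phi:\mathcal{A}\to Y$ with $X\subseteq Y$ and $|Y|=w$, then $w\ge (3v+1)/2$.
   Context: A $(v,k,\lambda)$-BIBD is a pair $(X,\mathcal{A})$ where $X$ is a set of $v$ points and $\mathcal{A}$ is a multiset of $k$-subsets of $X$ (blocks) such that every pair of distinct points lies in exactly $\lambda$ blocks. Given a $(v,k,\lambda)$-BIBD $(X,\mathcal{A})$ and a set $Y\supseteq X$ with $|Y|=w$, a map $\phi:\mathcal{A}\to Y$ is a strong nesting if (1) $\phi(A)\notin A$ for every block $A\in\mathcal{A}$, and (2) the multiset of pairs $\{\{x,\phi(A)\}: A\in\mathcal{A},\ x\in A\}$ (one pair for each block $A$, counted with multiplicity in $\mathcal{A}$, and each $x\in A$) consists of distinct pairs. *)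

(* Defs.v *)
From mathcomp Require Import all_boot.
Set Implicit Arguments. Unset Strict Implicit. Unset Printing Implicit Defensive.

(* The multiset of blocks is given as a family blk : B -> {set Y} indexed by a
   finite type B (repeated blocks = distinct indices with equal images). *)
Definition is_bibd (Y B : finType) (X : {set Y}) (blk : B -> {set Y})
    (k lambda : nat) : Prop :=
  (forall b, blk b \subset X) /\
  (forall b, #|blk b| = k) /\
  (forall x y, x \in X -> y \in X -> x != y ->
     #|[set b | (x \in blk b) && (y \in blk b)]| = lambda).

Definition strong_nesting (Y B : finType) (blk : B -> {set Y}) (phi : B -> Y)
    : Prop :=
  (forall b, phi b \notin blk b) /\
  (forall b1 b2 x1 x2, x1 \in blk b1 -> x2 \in blk b2 ->
     [set x1; phi b1] = [set x2; phi b2] -> b1 = b2 /\ x1 = x2).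

(* Main.v *)
From mathcomp Require Import all_boot zify.
Lemma cardP (T:finType) (P: pred T): #|[set t | P t]| = \sum_t P t.
Proof. by rewrite -sum1_card big_mkcond /=; apply: eq_bigr => t _; rewrite inE; case: (P t). Qed.
Lemma dbl (Y B : finType) (S : {set Y}) (P : B -> Y -> bool) :
  \sum_(y in S) #|[set b | P b y]| = \sum_b #|[set y in S | P b y]|.
Proof.
under eq_bigr => y _ do rewrite cardP.
rewrite exchange_big /=; apply: eq_bigr => b _.
by rewrite cardP big_mkcond /=; apply: eq_bigr => y _; case: (y \in S).
Qed.
Require Import Defs.

Theorem lemma4p2 (Y B : finType) (X : {set Y}) (blk : B -> {set Y})
    (phi : B -> Y) :
  #|X| %% 6 = 3 ->
  is_bibd X blk 3 2 ->
  strong_nesting blk phi ->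
  3 * #|X| + 1 <= 2 * #|Y|.
Proof.
move=> hv [hsub [hk hl]] [hphi hinj].
pose n y := #|[set b | phi b == y]|.
have r_eq : forall x, x \in X -> #|[set b | x \in blk b]| = #|X| - 1.
  move=> x xX.
  have h1 : \sum_(y in X :\ x) #|[set b | (x \in blk b) && (y \in blk b)]| = 2 * (#|X| - 1).
    rewrite (eq_bigr (fun _ => 2)); last first.
      by move=> y; rewrite !inE => /andP [yx yX]; apply: hl => //; rewrite eq_sym.
    by rewrite sum_nat_const (cardsD1 x X) xX /=; lia.
  rewrite dbl in h1.
  have h2 : \sum_b #|[set y in X :\ x | (x \in blk b) && (y \in blk b)]| = \sum_b (x \in blk b) * 2.
    apply: eq_bigr => b _; case xb: (x \in blk b) => /=.
      have -> : [set y in X :\ x | y \in blk b] = blk b :\ x.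
        apply/setP => y; rewrite !inE; case yb: (y \in blk b); rewrite ?andbF ?andbT //.
        by rewrite (subsetP (hsub b) y yb) andbT.
      by have := cardsD1 x (blk b); rewrite xb hk; lia.
    rewrite (_ : [set y in X :\ x | false] = set0) ?cards0 //.
    by apply/setP => y; rewrite !inE andbF.
  rewrite h2 -big_distrl /= -cardP in h1; lia.
have hB : 3 * #|B| = #|X| * (#|X| - 1).
  have : \sum_(x in X) #|[set b | x \in blk b]| = \sum_(x in X) (#|X| - 1).
    by apply: eq_bigr => x xX; rewrite r_eq.
  rewrite sum_nat_const dbl => <-.
  rewrite -sum1_card big_distrr /=; apply: eq_bigr => b _.
  rewrite muln1 -(hk b); apply: eq_card => y; rewrite !inE.
  by case yb: (y \in blk b); rewrite ?andbT ?andbF // (subsetP (hsub b)).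
have hn : #|B| = \sum_y n y.
  have := dbl Y B [set: Y] (fun b y => phi b == y).
  rewrite /n (eq_bigl _ _ (fun y => in_setT y)) => ->.
  rewrite -sum1_card; apply: eq_bigr => b _.
  rewrite (_ : [set y in [set: Y] | phi b == y] = [set phi b]) ?cards1 //.
  by apply/setP => y; rewrite !inE eq_sym.
pose T y := [set p : B * Y | (phi p.1 == y) && (p.2 \in blk p.1)].
have hT : forall y, #|T y| = 3 * n y.
  move=> y; rewrite /T cardP -(pair_bigA _ (fun b x => ((phi b == y) && (x \in blk b) : nat))) /= /n cardP mulnC big_distrl /=.
  apply: eq_bigr => b _; case: (phi b == y) => /=; last by rewrite big1.
  rewrite -cardP -(hk b) mul1n; apply: eq_card => x; by rewrite inE.
pose E2 y := [set p.2 | p in T y].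
have hE2 : forall y, #|E2 y| = 3 * n y.
  move=> y; rewrite -hT card_in_imset // => [[b1 x1]] [b2 x2]; rewrite !inE /= => /andP [/eqP e1 h1] /andP [/eqP e2 h2] ex.
  subst x2; have E : [set x1; phi b1] = [set x1; phi b2] by rewrite e1 e2.
  have [-> _] := hinj b1 b2 x1 x1 h1 h2 E.
  by [].
pose E1 y := [set phi b | b in [set b | y \in blk b]].
have hE1 : forall y, #|E1 y| = #|[set b | y \in blk b]|.
  move=> y; rewrite card_in_imset // => b1 b2; rewrite !inE => h1 h2 e.
  have E : [set y; phi b1] = [set y; phi b2] by rewrite e.
  by have [] := hinj b1 b2 y y h1 h2 E.
have hX : forall y, y \in X -> 3 * n y + (#|X| - 1) <= #|Y| - 1.
  move=> y yX; rewrite -hE2 -(r_eq y yX) -hE1 -cardsUI.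
  have -> : E2 y :&: E1 y = set0.
    apply/setP => z; rewrite !inE; apply/negbTE/negP => /andP [/imsetP [[b2 x2]]].
    rewrite inE /= => /andP [/eqP e2 h2] -> /imsetP [b1]; rewrite inE => h1 e1.
    have E : [set y; phi b1] = [set x2; phi b2] by rewrite -e1 e2 setUC.
    have [eb ex] := hinj b1 b2 y x2 h1 h2 E.
    by move: (hphi b1); rewrite -e1 -ex h1.
  rewrite cards0 addn0 subn1 -(cardsC1 y).
  apply: subset_leq_card; apply/subsetP => z; rewrite !inE => /orP [].
    case/imsetP => [[b x]]; rewrite inE /= => /andP [/eqP e h] ->; apply/eqP => zy.
    by move: (hphi b); rewrite e -zy h.
  case/imsetP => b; rewrite inE => h ->; apply/eqP => zy.
  by move: (hphi b); rewrite zy h.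
have hnX : forall y, y \notin X -> 3 * n y <= #|X|.
  move=> y _; rewrite -hE2; apply: subset_leq_card; apply/subsetP => z.
  case/imsetP => [[b x]]; rewrite inE /= => /andP [_ h] ->.
  exact: (subsetP (hsub b)).
have vpos : 0 < #|X| by lia.
rewrite hn (bigID (fun y => y \in X)) /= in hB.
have s1 : \sum_(y | y \in X) n y <= #|X| * ((#|Y| - #|X|) %/ 3).
  rewrite -sum_nat_const; apply: leq_sum => y yX; have := hX y yX; lia.
have s2 : \sum_(y | ~~ (y \in X)) n y <= #|[predC X]| * (#|X| %/ 3).
  rewrite -sum_nat_const; apply: leq_sum => y yX; have := hnX y yX; lia.
have cc := cardC X.
move: s1 s2 hB cc.
set a := \sum_(y | y \in X) n y.
set a2 := \sum_(y | ~~ (y \in X)) n y.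
set c := #|[predC X]|.
have vE : #|X| = 6 * (#|X| %/ 6) + 3 by lia.
move: vE; set t := #|X| %/ 6. set v := #|X|. set w := #|Y|.
move=> vE s1 s2 hB cc.
rewrite leqNgt; apply/negP => hw.
have h1 : (w - v) %/ 3 <= t by lia.
have h2 : v %/ 3 = 2 * t + 1 by lia.
have h3 : c <= 3 * t + 1 by lia.
have h4 : v * ((w - v) %/ 3) <= v * t by apply: leq_mul.
have h5 : c * (v %/ 3) <= (3*t+1) * (2*t+1) by rewrite h2; apply: leq_mul.
nia.
Qed.
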